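(* Let $P$ be a finite nonempty set of nonempty linear strings over an ordered finite alphabet $\Sigma$. Let $c$ be any circular superstring of $P\cup\overline P$. Then $g(c)$ is a linear superstring of $P$, and $|g(c)|\le |c|/2$.
   Context: Let $\overline\Sigma=\{\overline a: a\in\Sigma\}$ be a disjoint copy of $\Sigma$. The alphabet $\Sigma\cup\overline\Sigma$ is totally ordered so that $a<\overline b$ for all $a\in\Sigma$ and $\overline b\in\overline\Sigma$. For $w=a_1\dots a_k$ over $\Sigma$, set $\overline w=\overline{a_1}\dots\overline{a_k}$, and let $\overline P=\{\overline w: w\in P\}$. A circular string $\langle a_1\dots a_n\rangle$ has length $n$, and its substrings are the finite substrings of $(a_1\dots a_n)^\infty$. A (circular or linear) superstring of a set of strings contains each of them as a substring. For a circular superstring $c$ of $P\cup\overline P$ of length $k$, let $l(c)$ be the lexicographically smallest linear string among the circular shifts of $c$ whose first letter is in $\Sigma$ and whose $k$-th (last) letter is in $\overline\Sigma$. For a linear string $w$ and a sub-alphabet $\Sigma''$, $w|_{\Sigma''}$ denotes the subsequence of $w$ formed by its letters in $\Sigma''$. Let $g'(c)$ be whichever of $l(c)|_{\Sigma}$ and $l(c)|_{\overline\Sigma}$ has minimal length. Then set $g(c)=a_1\dots a_k$ if either $g'(c)=a_1\dots a_k\in\Sigma^*$ or $g'(c)=\overline{a_1}\dots\overline{a_k}\in\overline\Sigma^*$. *)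

(* Defs.v *)
From HB Require Import structures.
From mathcomp Require Import all_boot all_order.
Set Implicit Arguments. Unset Strict Implicit. Unset Printing Implicit Defensive.
Import Order.TTheory.

(* Letters of Sigma ∪ Sigma-bar are encoded as [Sigma + Sigma]:
   [inl a] is the letter a, [inr a] is the letter \overline a. *)
Section Strings.
Context {d : Order.disp_t} {Sigma : finOrderType d}.

Local Notation letter := (Sigma + Sigma)%type.

Definition letter_lt (x y : letter) : bool :=
  match x, y with
  | inl a, inl b => (a < b)%O
  | inl _, inr _ => true
  | inr _, inl _ => false
  | inr a, inr b => (a < b)%O
  end.

Fixpoint lex_le (s t : seq letter) : bool :=
  match s, t with
  | [::], _ => true
  | _ :: _, [::] => false
  | x :: s', y :: t' => letter_lt x y || ((x == y) && lex_le s' t')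
  end.

Definition lex_min (ss : seq (seq letter)) : seq letter :=
  match ss with
  | [::] => [::]
  | s :: ss' => foldl (fun m t => if lex_le t m then t else m) s ss'
  end.

Definition bar (w : seq Sigma) : seq letter := map inr w.
Definition unbar (w : seq Sigma) : seq letter := map inl w.

(* A circular string <w> (represented by a linear representative w) contains s
   iff s is a substring of w^infinity, i.e. of some finite power of w. *)
Definition circ_substring (s w : seq letter) : Prop :=
  exists n, infix s (flatten (nseq n w)).

Definition circ_superstring (Q : seq (seq letter)) (w : seq letter) : Prop :=
  forall s, s \in Q -> circ_substring s w.

Definition is_plain (x : letter) : bool := if x is inl _ then true else false.
Definition is_barred (x : letter) : bool := if x is inr _ then true else false.

Definition good_lin (s : seq letter) : bool :=
  (if s is x :: _ then is_plain x else false) &&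
  (if rev s is y :: _ then is_barred y else false).

Definition good_shifts (w : seq letter) : seq (seq letter) :=
  [seq s <- [seq rot i w | i <- iota 0 (size w)] | good_lin s].

Definition lc (w : seq letter) : seq letter := lex_min (good_shifts w).

Definition getl (x : letter) : option Sigma := if x is inl a then Some a else None.
Definition getr (x : letter) : option Sigma := if x is inr a then Some a else None.
Definition restr_plain (s : seq letter) : seq Sigma := pmap getl s.
Definition restr_barred (s : seq letter) : seq Sigma := pmap getr s.

Definition gc (w : seq letter) : seq Sigma :=
  let l := lc w in
  if size (restr_plain l) <= size (restr_barred l) then restr_plain l
  else restr_barred l.

End Strings.

(* Main.v *)
Require Import Defs.
From mathcomp Require Import all_boot all_order.
From mathcomp Require Import zify.
Set Implicit Arguments. Unset Strict Implicit.

Section Gen.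
Variable T : eqType.
Variable q : pred T.

Definition lastnot (l : seq T) := if rev l is y :: _ then ~~ q y else false.
Definition headnot (l : seq T) := if l is y :: _ then ~~ q y else false.

Lemma lastnot_cons x l : lastnot (x :: l) = if l is [::] then ~~ q x else lastnot l.
Proof.
rewrite /lastnot; case: l => [|y l] //.
rewrite rev_cons; case E: (rev (y :: l)) => [|z r].
  by move/(congr1 size): E; rewrite size_rev.
by rewrite rcons_cons.
Qed.

Lemma prefix_straddle s l t : all q s -> lastnot l || headnot t ->
  prefix s (l ++ t) -> prefix s l.
Proof.
elim: s l => [|y s IH] l; first by case: l.
move=> /= /andP[qy qs] H.
case: l H => [|x l] /= H.
  rewrite /lastnot /= in H. case E: t H => [|z t'] //= H /andP[/eqP e _]; subst.
  by rewrite qy in H.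
case/andP=> /eqP e Hp; subst. rewrite eqxx /=.
move: H; rewrite lastnot_cons; case: l Hp => [|z l] Hp.
  rewrite qy /= => Ht; apply: (IH [::] qs) => //; by rewrite Ht orbT.
move=> H; exact: (IH _ qs H Hp).
Qed.

Lemma infix_straddle s l t : all q s -> s != [::] -> lastnot l || headnot t ->
  infix s (l ++ t) -> infix s l || infix s t.
Proof.
move=> qs sn; elim: l => [|x l IH] H; first by move=> ->; rewrite orbT.
rewrite cat_cons infix_consl (infix_consl s x l) => /orP[].
  by move/(prefix_straddle qs H) => ->.
move: H; rewrite lastnot_cons; case: l IH => [|z l] IH H.
  by move=> ->; rewrite !orbT.
move=> /(IH H) /orP[->|->]; by rewrite ?orbT.
Qed.

Lemma infix_pow s l m : all q s -> s != [::] ->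
  (lastnot l || (if l is y :: _ then ~~ q y else false)) ->
  infix s (flatten (nseq m l)) -> infix s l.
Proof.
move=> qs sn H; elim: m => [|m IH] /=; first by case: (s) sn.
case: m IH => [|m] IH; first by rewrite cats0.
move=> Hi.
have Hb : lastnot l || headnot (flatten (nseq m.+1 l)).
  case/orP: H => [->//|]. by case: (l) => //= y l' ->; rewrite orbT.
by case/orP: (infix_straddle qs sn Hb Hi) => // /IH.
Qed.

Lemma flatten_rot (A B : seq T) n : flatten (nseq n.+1 (A ++ B)) = A ++ flatten (nseq n (B ++ A)) ++ B.
Proof.
elim: n => [|n IH] /=; first by rewrite cats0.
by rewrite /= in IH; rewrite IH !catA.
Qed.

Lemma circ_rot (s w : seq T) i : (exists n, infix s (flatten (nseq n w))) ->
  exists m, infix s (flatten (nseq m (rot i w))).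
Proof.
case=> n H; exists n.+1; rewrite /rot flatten_rot cat_take_drop.
by apply: infix_trans H _; apply: infix_infix.
Qed.

Lemma mem_pow (x : T) n w : x \in flatten (nseq n w) -> x \in w.
Proof. elim: n => //= n IH; rewrite mem_cat => /orP[//|]; exact: IH. Qed.

Lemma infix_pmap (U : Type) (f : T -> option U) s t :
  infix s t -> exists a b, pmap f t = a ++ pmap f s ++ b.
Proof. case/infixP=> a [b ->]; exists (pmap f a), (pmap f b); by rewrite !pmap_cat. Qed.

Lemma lex_min_mem (ss : seq (seq T)) (f : seq T -> seq T -> bool) :
  forall m, foldl (fun m t => if f t m then t else m) m ss \in m :: ss.
Proof.
elim: ss => [|t ss IH] m /=; first by rewrite inE.
case: (f t m).
  by move: (IH t); rewrite !inE => /orP[->|->]; rewrite ?orbT.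
by move: (IH m); rewrite !inE => /orP[->|->]; rewrite ?orbT.
Qed.
End Gen.

Section Main.
Context {d : Order.disp_t} {Sigma : finOrderType d}.
Local Notation letter := (Sigma + Sigma)%type.

Lemma rot_in (w : seq letter) n : w != [::] ->
  rot n w \in [seq rot i w | i <- iota 0 (size w)].
Proof.
move=> wn; case: (ltnP n (size w)) => h.
  by apply: map_f; rewrite mem_iota.
rewrite rot_oversize //; apply/mapP; exists 0; last by rewrite rot0.
by rewrite mem_iota; case: w wn {h}.
Qed.

Lemma exists_good (w : seq letter) x y : x \in w -> is_plain x -> y \in w -> is_barred y ->
  exists n, good_lin (rot n w).
Proof.
move=> xw px yw by_.
have hb : has is_barred w by apply/hasP; exists y.
set j := find is_barred w.
have jlt : j < size w by rewrite -has_find.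
set u := rot j.+1 w.
have Eu : u = drop j.+1 w ++ rcons (take j w) (nth y w j).
  by rewrite /u /rot (take_nth y).
have hp : has is_plain u by apply/hasP; exists x; rewrite // mem_rot.
set k := find is_plain u.
have klt : k < size u by rewrite -has_find.
have pk : is_plain (nth y u k) by apply: nth_find.
have bj : is_barred (nth y w j) by apply: nth_find.
suff g : good_lin (rot k u).
  have klt' : k < size w by move: klt; rewrite /u size_rot.
  move: g; rewrite /u rot_add_mod ?size_rot ?(ltnW klt') //.
  by move=> g; eexists; exact: g.
have bf : forall i, i < k -> is_plain (nth y u i) = false.
  by move=> i; apply: before_find.
clearbody k.
case: k klt pk bf => [|k] klt pk bf.
  rewrite rot0 /good_lin; apply/andP; split.
    by move: pk klt; case: (u).
  by rewrite Eu rev_cat rev_rcons.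
rewrite /good_lin /rot (drop_nth y) // (take_nth y) ?(ltnW klt) //= pk /=.
rewrite rev_cons rev_cat rev_rcons /=.
have := bf k (ltnSn k). by case: (nth y u k).
Qed.

Lemma pmap_unbar (p : seq Sigma) : pmap getl (unbar p) = p.
Proof. by elim: p => //= a p ->. Qed.
Lemma pmap_bar (p : seq Sigma) : pmap getr (bar p) = p.
Proof. by elim: p => //= a p ->. Qed.

Lemma size_restr (l : seq letter) : size (restr_plain l) + size (restr_barred l) = size l.
Proof.
rewrite /restr_plain /restr_barred.
elim: l => //= x l IH; case: x => a /=; rewrite -IH ?addSn ?addnS //.
Qed.

Lemma mem_circ (s w : seq letter) z : circ_substring s w -> z \in s -> z \in w.
Proof.
case=> n /infixP [a [b E]] zs; apply: (@mem_pow _ z n).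
by rewrite E !mem_cat zs orbT.
Qed.

End Main.

Theorem lemma4 (d : Order.disp_t) (Sigma : finOrderType d)
  (P : seq (seq Sigma)) (w : seq (Sigma + Sigma)) :
  P != [::] ->
  (forall p, p \in P -> p != [::]) ->
  circ_superstring (map unbar P ++ map bar P) w ->
  (forall p, p \in P -> infix p (gc w)) /\ (2 * size (gc w) <= size w)%N.
Proof.
move=> Pn Pne Hc.
have Hu p : p \in P -> circ_substring (unbar p) w.
  by move=> pP; apply: Hc; rewrite mem_cat map_f.
have Hb p : p \in P -> circ_substring (bar p) w.
  by move=> pP; apply: Hc; rewrite mem_cat map_f ?orbT.
have [p0 p0P] : exists p0, p0 \in P.
  by case: (P) Pn => // p0 ? _; exists p0; rewrite inE eqxx.
have [a ap0] : exists a, a \in p0.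
  by case: p0 p0P (Pne _ p0P) => // a ? _ _; exists a; rewrite inE eqxx.
have xw : inl a \in w by apply: (mem_circ (Hu _ p0P)); rewrite map_f.
have yw : inr a \in w by apply: (mem_circ (Hb _ p0P)); rewrite map_f.
have wn : w != [::] by case: (w) xw.
have [n gn] := exists_good xw erefl yw erefl.
set l := lc w.
have lmem : l \in good_shifts w.
  have : rot n w \in good_shifts w by rewrite mem_filter gn rot_in.
  rewrite /l /lc; case: (good_shifts w) => // s ss _; exact: lex_min_mem.
move: lmem; rewrite mem_filter => /andP[gl /mapP [i _ El]].
have Egc : gc w = (if size (restr_plain l) <= size (restr_barred l)
   then restr_plain l else restr_barred l) by [].
have sl : size l = size w by rewrite El size_rot.
split; last first.
  have := size_restr l; rewrite Egc; case: ifP => h; lia.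
move=> p pP.
have pn := Pne _ pP.
have I1 : infix (unbar p) l.
  have [m Hm] := circ_rot i (Hu _ pP); rewrite -El in Hm.
  apply: (infix_pow (q := is_plain) _ _ _ Hm).
  - by rewrite all_map; apply/allP.
  - by case: (p) pn.
  - move: gl; rewrite /good_lin /lastnot => /andP[_]; case: (rev l) => // z ?.
    by case: z.
have I2 : infix (bar p) l.
  have [m Hm] := circ_rot i (Hb _ pP); rewrite -El in Hm.
  apply: (infix_pow (q := is_barred) _ _ _ Hm).
  - by rewrite all_map; apply/allP.
  - by case: (p) pn.
  - move: gl; rewrite /good_lin => /andP[]; case: (l) => // z ? /=.
    by case: z => //= ? _; rewrite orbT.
rewrite Egc; case: ifP => _.
  have [a' [b' E]] := infix_pmap getl I1; apply/infixP; exists a', b'.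
  by rewrite /restr_plain E pmap_unbar.
have [a' [b' E]] := infix_pmap getr I2; apply/infixP; exists a', b'.
by rewrite /restr_barred E pmap_bar.
Qed.
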